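(* Let $M\in S_d^+$, let $\mathcal T$ be an $M$-reduced mesh and $\Lambda$ the associated Hopf–Lax operator. Let $\delta_+,\delta_-:\mathbb Z^d\to\mathbb R_+\cup\{\infty\}$ be respectively a discrete super-solution and a discrete sub-solution. Then $\delta_-\le\delta_+$ on $\mathbb Z^d$.
   Context: $S_d^+$ is the set of $d\times d$ symmetric positive definite matrices; $\langle u,v\rangle_M:=u^TMv$, $\|u\|_M:=\sqrt{\langle u,u\rangle_M}$. An $M$-reduced mesh is a finite conforming mesh $\mathcal T$ of simplices in $\mathbb R^d$ such that: (I) the union of its simplices is a neighborhood of the origin; (II) the vertices of each $T\in\mathcal T$ lie in $\mathbb Z^d$ and $T$ has volume $1/d!$; (III) each $T\in\mathcal T$ has the origin as a vertex, and its other vertices $v_1,\dots,v_d$ satisfy $\langle v_i,v_j\rangle_M\ge0$ for all $i,j$. For $\delta:\mathbb Z^d\to\mathbb R_+\cup\{\infty\}$ and $z\in\mathbb Z^d$, $\Lambda(\delta,z):=\min\{\|\sum_{i=1}^k\alpha_iv_i\|_M+\sum_{i=1}^k\alpha_i\delta(z+v_i)\}$ over $1\le k\le d$, $\alpha_i\ge0$ with $\sum_i\alpha_i=1$, and non-zero vertices $v_1,\dots,v_k$ of a common simplex of $\mathcal T$ (convention $0\times\infty=0$). A map $\delta:\mathbb Z^d\to\mathbb R_+\cup\{\infty\}$ is a super-solution (resp. sub-solution) if $\delta(0)=0$ and $\delta(z)\ge\Lambda(\delta,z)$ (resp. $\delta(z)\le\Lambda(\delta,z)$) for all $z\in\mathbb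 Z^d\setminus\{0\}$. *)

(* Defs.v *)
From HB Require Import structures.
From mathcomp Require Import all_boot all_order all_algebra.
From mathcomp Require Import all_classical all_reals all_analysis.
Set Implicit Arguments. Unset Strict Implicit. Unset Printing Implicit Defensive.
Import Order.TTheory GRing.Theory Num.Theory.
Import numFieldNormedType.Exports.
Local Open Scope classical_set_scope.
Local Open Scope ring_scope.

Section Defs.
Variables (R : realType) (d : nat).

Definition toR (z : 'rV[int]_d) : 'rV[R]_d := map_mx (fun x : int => x%:~R) z.

Definition sym_pos_def (M : 'M[R]_d) : Prop :=
  M^T = M /\ forall u : 'rV[R]_d, u != 0 -> 0 < (u *m M *m u^T) 0 0.

Definition scalM (M : 'M[R]_d) (u v : 'rV[R]_d) : R := (u *m M *m v^T) 0 0.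
Definition normM (M : 'M[R]_d) (u : 'rV[R]_d) : R := Num.sqrt (scalM M u u).

(* A simplex of the mesh having the origin as a vertex is represented by the
   d x d integer matrix whose rows are its other vertices v_1, ..., v_d;
   the simplex is conv(0, v_1, ..., v_d). *)
Definition in_simplex (T : 'M[int]_d) (x : 'rV[R]_d) : Prop :=
  exists lam : 'I_d -> R, [/\ forall i, 0 <= lam i, \sum_i lam i <= 1 &
     x = \sum_i lam i *: toR (row i T)].

Definition is_vertex (T : 'M[int]_d) (v : 'rV[int]_d) : Prop :=
  exists i, v = row i T.

Definition simplex_volume (T : 'M[int]_d) : R :=
  `|(\det T)%:~R| / (d`!)%:R.

(* Conformity: the intersection of two simplices of the mesh is their common
   face, i.e. the convex hull of their common vertices (0 is always one). *)
Definition conforming (mesh : seq 'M[int]_d) : Prop :=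
  forall T T', T \in mesh -> T' \in mesh -> forall x : 'rV[R]_d,
    in_simplex T x -> in_simplex T' x ->
    exists lam : 'I_d -> R, [/\ forall i, 0 <= lam i, \sum_i lam i <= 1,
      forall i, lam i != 0 -> is_vertex T' (row i T) &
      x = \sum_i lam i *: toR (row i T)].

Definition M_reduced_mesh (M : 'M[R]_d) (mesh : seq 'M[int]_d) : Prop :=
  [/\ conforming mesh,
      (\forall x \near (0 : 'rV[R]_d), exists2 T, T \in mesh & in_simplex T x),
      (* (II) integer vertices (built in) and volume 1/d! *)
      (forall T, T \in mesh -> simplex_volume T = 1 / (d`!)%:R) &
      (forall T, T \in mesh -> forall i j,
          0 <= scalM M (toR (row i T)) (toR (row j T)))].

Local Open Scope ereal_scope.

(* The Hopf-Lax operator.  The paper's "min" is attained, so it equals this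
   infimum.  Extended-real multiplication satisfies 0 * +oo = 0. *)
Definition HopfLax (M : 'M[R]_d) (mesh : seq 'M[int]_d)
    (delta : 'rV[int]_d -> \bar R) (z : 'rV[int]_d) : \bar R :=
  ereal_inf [set y | exists (k : nat) (alpha : 'I_k -> R)
      (v : 'I_k -> 'rV[int]_d) (T : 'M[int]_d),
      [/\ (1 <= k <= d)%N, T \in mesh, forall i, is_vertex T (v i) &
          (forall i, (0 <= alpha i)%R) /\ (\sum_i alpha i = 1)%R] /\
      y = (normM M (\sum_i alpha i *: toR (v i)))%:E
              + \sum_i (alpha i)%:E * delta ((z + v i)%R)].

Definition nonneg_ext (delta : 'rV[int]_d -> \bar R) : Prop :=
  forall z, 0 <= delta z.

Definition super_solution M mesh (delta : 'rV[int]_d -> \bar R) : Prop :=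
  delta 0%R = 0 /\ forall z, z != 0%R -> delta z >= HopfLax M mesh delta z.

Definition sub_solution M mesh (delta : 'rV[int]_d -> \bar R) : Prop :=
  delta 0%R = 0 /\ forall z, z != 0%R -> delta z <= HopfLax M mesh delta z.

End Defs.

(* Main.v *)
Require Import Defs.
From HB Require Import structures.
From mathcomp Require Import all_boot all_order all_algebra.
From mathcomp Require Import all_classical all_reals all_analysis.
From mathcomp Require Import ring lra.
Import Order.TTheory GRing.Theory Num.Theory.
Local Open Scope ring_scope.

Section LA.
Variables (R : realType) (d : nat) (M : 'M[R]_d).

Lemma scalM_sum k (a b : 'I_k -> R) (u : 'I_k -> 'rV[R]_d) :
  scalM M (\sum_i a i *: u i) (\sum_j b j *: u j) =
  \sum_i \sum_j a i * b j * scalM M (u i) (u j).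
Proof.
rewrite /scalM raddf_sum /= mulmx_sumr summxE.
rewrite exchange_big /=; apply: eq_bigr => j _.
rewrite mulmx_suml mulmx_suml summxE; apply: eq_bigr => i _.
rewrite linearZ /= -scalemxAr -scalemxAl -scalemxAl !mxE.
by rewrite mulrA [b j * a i]mulrC.
Qed.

Lemma scalM_mono k (a b : 'I_k -> R) (u : 'I_k -> 'rV[R]_d) :
  (forall i j, 0 <= scalM M (u i) (u j)) ->
  (forall i, 0 <= b i <= a i) ->
  normM M (\sum_i b i *: u i) <= normM M (\sum_i a i *: u i).
Proof.
move=> hs hab; rewrite /normM ler_sqrt; last first.
  by rewrite scalM_sum; apply: sumr_ge0 => i _; apply: sumr_ge0 => j _;
  apply: mulr_ge0 => //; apply: mulr_ge0; have /andP[h1 h2] := hab i;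
  [exact: le_trans h2| have /andP[h3 h4] := hab j; exact: le_trans h4].
rewrite !scalM_sum; apply: ler_sum => i _; apply: ler_sum => j _.
apply: ler_wpM2r => //; have /andP[h1 h2] := hab i; have /andP[h3 h4] := hab j.
exact: ler_pM.
Qed.

Lemma normMZ (a : R) (u : 'rV[R]_d) : 0 <= a -> normM M (a *: u) = a * normM M u.
Proof.
move=> ha; rewrite /normM /scalM -scalemxAl linearZ /= -scalemxAr -scalemxAl scalerA.
have -> : forall X : 'M[R]_1, (a * a *: X) 0 0 = a * a * X 0 0 by move=> X; rewrite mxE.
by rewrite sqrtrM ?mulr_ge0 // -expr2 sqrtr_sqr ger0_norm.
Qed.

Lemma toR_eq0 (v : 'rV[int]_d) : toR R v = 0 -> v = 0.
Proof.
move=> h; apply/matrixP => i j; have := congr1 (fun A : 'M[R]_(1,d) => A i j) h.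
by rewrite /toR !mxE => /eqP; rewrite intr_eq0 => /eqP.
Qed.

Lemma row_neq0_det (T : 'M[int]_d) i : row i T = 0 -> \det T = 0.
Proof.
move=> h; rewrite (expand_det_row _ i) big1 // => j _.
by have := congr1 (fun A : 'M[int]_(1,d) => A 0 j) h; rewrite !mxE => ->; rewrite mul0r.
Qed.

Lemma min_pos (X : eqType) (s : seq X) (g : X -> R) :
  (forall x, x \in s -> 0 < g x) -> exists2 b, 0 < b & forall x, x \in s -> b <= g x.
Proof.
elim: s => [|y s IH] h; first by exists 1.
have [b hb hs] : exists2 b, 0 < b & forall x, x \in s -> b <= g x.
  by apply: IH => x xs; apply: h; rewrite inE xs orbT.
have gy : 0 < g y by apply: h; rewrite inE eqxx.
exists (Num.min b (g y)); first by rewrite lt_min hb gy.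
move=> x; rewrite inE => /orP[/eqP->|xs]; first by rewrite ge_min lexx orbT.
by rewrite ge_min hs.
Qed.

Lemma unif_b (mesh : seq 'M[int]_d) : sym_pos_def M ->
  (forall T, T \in mesh -> simplex_volume R T = 1 / (d`!)%:R) ->
  exists2 b, 0 < b & forall T i, T \in mesh -> b <= normM M (toR R (row i T)).
Proof.
move=> [_ hpd] hvol.
case: (@min_pos _ [seq row i T | T <- mesh, i <- enum 'I_d]
   (fun v => normM M (toR R v))) => [x|b hb H]; last first.
  exists b => // T i hT; apply: H; apply: (allpairs_f (fun T i => row i T)) => //.
  by rewrite mem_enum.
move=>  /allpairsP [[T i] /= [hT hi ->]].
  rewrite /normM sqrtr_gt0; apply: hpd; apply/eqP => /toR_eq0 /row_neq0_det hd.
  have := hvol T hT; rewrite /simplex_volume hd mulr0z normr0 mul0r => /esym /eqP.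
by rewrite mul1r invr_eq0 pnatr_eq0 eqn0Ngt fact_gt0.
Qed.

End LA.

Section Main.
Variables (R : realType) (d : nat) (M : 'M[R]_d) (mesh : seq 'M[int]_d).
Definition cand k (a : 'I_k -> R) (v : 'I_k -> 'rV[int]_d) T :=
  [/\ (1 <= k <= d)%N, T \in mesh, forall i, is_vertex T (v i) &
          (forall i, (0 <= a i)%R) /\ (\sum_i a i = 1)%R].

Lemma acute_cand k a v T : M_reduced_mesh M mesh -> cand k a v T ->
  forall i j, (0 <= scalM M (toR R (v i)) (toR R (v j)))%R.
Proof.
move=> [_ _ _ hac] [_ hT hv _] i j.
by have [i' ->] := hv i; have [j' ->] := hv j; apply: hac.
Qed.

Lemma norm_lb b k a v T : M_reduced_mesh M mesh -> cand k a v T ->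
  (forall T i, T \in mesh -> (b <= normM M (toR R (row i T)))%R) -> (0 < b)%R ->
  (b / (d%:R + 1) <= normM M (\sum_i a i *: toR R (v i)))%R.
Proof.
move=> hm hc hb b0; have hac := acute_cand _ _ _ _ hm hc.
case: hc => /andP[k1 kd] hT hv [a0 a1].
have [j hj] : exists j, (k%:R^-1 <= a j)%R.
  case: (pselect (exists j, (k%:R^-1 <= a j)%R)) => // H; exfalso.
  have : (\sum_(i < k) a i < \sum_(i < k) k%:R^-1)%R.
    apply: ltr_sum; first by apply/hasP; exists (Ordinal k1); rewrite ?mem_index_enum.
    by move=> i _; rewrite ltNge; apply/negP => hi; apply: H; exists i.
  rewrite a1 sumr_const card_ord -[X in (_ < X)%R]mulr_natr mulVf ?ltxx //.
  by rewrite pnatr_eq0 -lt0n.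
have kpos : (0 < k%:R :> R)%R by rewrite ltr0n.
apply: (@le_trans _ _ (normM M (\sum_i (if i == j then a j else 0%R) *: toR R (v i)))).
  rewrite (bigD1 j) //= big1 ?addr0; last first.
    by move=> i /negbTE ->; rewrite scale0r.
  rewrite eqxx normMZ; last by apply: le_trans hj; rewrite invr_ge0 ler0n.
  have [j' ->] := hv j; have := hb T j' hT => hbj.
  apply: (@le_trans _ _ (k%:R^-1 * b)%R); last first.
    apply: ler_pM; rewrite ?invr_ge0 ?ler0n // ?ltW //.
  rewrite [X in (_ <= X)%R]mulrC ler_pM2l // lef_pV2 ?posrE ?ltr0n //.
    by apply: (le_trans (y := d%:R)); [rewrite ler_nat | rewrite lerDl].
apply: scalM_mono => // i; case: eqP => [->|_]; first by rewrite lexx a0.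
by rewrite lexx a0.
Qed.

Local Open Scope ereal_scope.

Definition val (dl : 'rV[int]_d -> \bar R) z k (a : 'I_k -> R)
  (v : 'I_k -> 'rV[int]_d) : \bar R :=
  (normM M (\sum_i a i *: toR R (v i)))%:E + \sum_i (a i)%:E * dl (z + v i)%R.


Lemma HL_lb dl z k a v T : cand k a v T -> HopfLax M mesh dl z <= val dl z k a v.
Proof. by move=> h; apply: ereal_inf_lbound; exists k, a, v, T. Qed.

Lemma HL_approx dl z x : HopfLax M mesh dl z < x ->
  exists k a v T, cand k a v T /\ val dl z k a v < x.
Proof.
by move=> /ereal_inf_lt [y [k [a [v [T [hc ->]]]]] hy]; exists k, a, v, T.
Qed.

Lemma term_le k (f : 'I_k -> \bar R) j : (forall i, 0 <= f i) -> f j <= \sum_i f i.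
Proof. by move=> h; rewrite (bigD1 j) //=; apply: leeDl; apply: sume_ge0. Qed.



Lemma ediv (t : R) x y : (0 < t)%R -> t%:E * x <= y%:E -> x <= (y / t)%:E.
Proof.
move=> t0; case: x => [r||].
- by rewrite -EFinM !lee_fin ler_pdivlMr // mulrC.
- by rewrite gt0_muley ?lte_fin.
- by rewrite leNye.
Qed.

Lemma scaled (t : R) dp dm : (0 < t)%R -> (t < 1)%R ->
  sym_pos_def M -> M_reduced_mesh M mesh -> nonneg_ext dp -> nonneg_ext dm ->
  super_solution M mesh dp -> sub_solution M mesh dm ->
  forall z, t%:E * dm z <= dp z.
Proof.
move=> t0 t1 hpd hm hp0 hm0 [hp00 hsup] [hm00 hsub].
have hm' := hm; case: hm' => [_ _ hvol _].
have [b b0 hb] := @unif_b R d M mesh hpd hvol.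
pose c := (b / (d%:R + 1))%R.
have c0 : (0 < c)%R by rewrite divr_gt0 // ltr_wpDl.
pose eta := ((1 - t) * c / 4)%R.
have eta0 : (0 < eta)%R by rewrite /eta !divr_gt0 ?mulr_gt0 ?subr_gt0.
move=> z; rewrite leNgt; apply/negP => hz.
pose Bad := [set z | dp z < t%:E * dm z]%classic.
pose m := ereal_inf [set dp z | z in Bad]%classic.
have m0 : 0 <= m by apply/ereal_infP => _ [y _ <-]; exact: hp0.
have mfin : m \is a fin_num.
  rewrite ge0_fin_numE //; apply: (@le_lt_trans _ _ (dp z)).
    by apply: ereal_inf_lbound; exists z.
  by apply: (lt_le_trans hz); apply: leey.
pose mr := fine m.
have mE : m = mr%:E by rewrite /mr fineK.
have [_ [zs hzs <-] hlt] : exists2 y, [set dp z | z in Bad]%classic y & y < (mr + eta)%:E.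
  by apply: ereal_inf_lt; rewrite -/m mE lte_fin ltrDl.
have zs0 : zs != 0%R.
  by apply/eqP => E; move: hzs; rewrite /Bad /= E hp00 hm00 mule0 ltxx.
have dpfin : dp zs \is a fin_num.
  by rewrite ge0_fin_numE //; apply: (lt_trans hlt); apply: ltey.
pose pz := fine (dp zs).
have pzE : dp zs = pz%:E by rewrite /pz fineK.
have [k [a [v [T [hc hval]]]]] : exists k a v T, cand k a v T /\
    val dp zs k a v < (pz + eta)%:E.
  apply: HL_approx; apply: (le_lt_trans (hsup zs zs0)).
  by rewrite pzE lte_fin ltrDl.
have hac := acute_cand _ _ _ _ hm hc.
have [/andP[k1 kd] hT hv [a0 a1]] := hc.
pose w := normM M (\sum_i a i *: toR R (v i)).
pose p := fun i => fine (dp (zs + v i)%R).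
have hterm : forall i, (a i)%:E * dp (zs + v i)%R = (a i * p i)%:E /\
    ((0 < a i)%R -> dp (zs + v i)%R = (p i)%:E).
  move=> i; have [ai0|aipos] : a i = 0%R \/ (0 < a i)%R.
    by move: (a0 i); rewrite le_eqVlt => /orP[/eqP<-|->]; [left|right].
    by split; [rewrite ai0 mul0e mul0r | rewrite ai0 ltxx].
  suff fin : dp (zs + v i)%R \is a fin_num.
    by split => [|_]; rewrite /p ?EFinM fineK.
  rewrite ge0_fin_numE //; rewrite ltNge; apply/negP => hinf.
  have inf : dp (zs + v i)%R = +oo by apply/eqP; rewrite eq_le hinf leey.
  have : +oo <= val dp zs k a v.
    rewrite /val; apply: (@le_trans _ _ (w%:E + (a i)%:E * dp (zs + v i)%R)).
      by rewrite inf gt0_muley ?lte_fin // addey.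
    apply: leeD => //; apply: (term_le _ (fun j => (a j)%:E * dp (zs + v j)%R)).

    by move=> j; apply: mule_ge0; rewrite ?lee_fin.
  by rewrite leye_eq => /eqP E; move: hval; rewrite E.
have hsum : \sum_i (a i)%:E * dp (zs + v i)%R = (\sum_i (a i * p i))%:E.
  by rewrite -sumEFin; apply: eq_bigr => i _; case: (hterm i).
have hreal : (w + \sum_i a i * p i < pz + eta)%R.
  by move: hval; rewrite /val hsum -EFinD lte_fin.
have hpz : (pz < mr + eta)%R by move: hlt; rewrite pzE lte_fin.
pose bad := fun i => (0 < a i)%R && (dp (zs + v i)%R < t%:E * dm (zs + v i)%R).
pose be := fun i => if bad i then 0%R else a i.
have hbe : forall i, (0 <= be i <= a i)%R.
  by move=> i; rewrite /be; case: (bad i); rewrite ?lexx a0.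
have hpm : forall i, bad i -> (mr <= p i)%R.
  move=> i /andP[apos hbi]; rewrite -lee_fin -mE -(proj2 (hterm i) apos).
  by apply: ereal_inf_lbound; exists (zs + v i)%R.
have hp_ge0 : forall i, (0 <= p i)%R by move=> i; apply: fine_ge0; apply: hp0.
pose s := (\sum_i be i)%R.
have hsplit : (\sum_i be i * p i + (1 - s) * mr <= \sum_i a i * p i)%R.
  rewrite -a1 -sumrB mulr_suml -big_split /=; apply: ler_sum => i _.
  rewrite /be; case: (boolP (bad i)) => hbi.
    by rewrite mul0r add0r subr0; apply: ler_wpM2l; [exact: a0 | exact: hpm].
  by rewrite subrr mul0r addr0.
pose wb := normM M (\sum_i be i *: toR R (v i)).
have hwb : (wb <= w)%R := @scalM_mono _ _ _ _ _ _ _ hac hbe.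
have hwc : (c <= w)%R := norm_lb _ _ _ _ _ hm hc hb b0.
have wb0 : (0 <= wb)%R by apply: sqrtr_ge0.
have sbp0 : (0 <= \sum_i be i * p i)%R.
  by apply: sumr_ge0 => i _; apply: mulr_ge0 => //; case/andP: (hbe i).
have s0 : (0 <= s)%R by apply: sumr_ge0 => i _; case/andP: (hbe i).
have key : (t * wb + \sum_i be i * p i < s * mr)%R.
  have h1 : (t * wb <= t * w)%R by apply: ler_wpM2l => //; apply: ltW.
  have h2 : ((1 - t) * c <= (1 - t) * w)%R by apply: ler_wpM2l => //; rewrite subr_ge0 ltW.
  have h3 : (0 < (1 - t) * c)%R by rewrite mulr_gt0 // subr_gt0.
  rewrite /eta in hreal hpz; lra.
have twb0 : (0 <= t * wb)%R by rewrite mulr_ge0 // ltW.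
have spos : (0 < s)%R.
  rewrite lt_neqAle s0 andbT; apply/eqP => s0E; rewrite -s0E mul0r in key; lra.
pose a' := fun i => (be i / s)%R.
have hc' : cand k a' v T.
  split => //; first by rewrite k1 kd.
  split; first by move=> i; rewrite divr_ge0 //; case/andP: (hbe i).
  by rewrite -mulr_suml divff // gt_eqF.
have hdm : dm zs <= val dm zs k a' v := le_trans (hsub zs zs0) (HL_lb _ _ _ _ _ _ hc').
have hnorm : normM M (\sum_i a' i *: toR R (v i)) = (s^-1 * wb)%R.
  rewrite /wb -normMZ ?invr_ge0 ?ltW // scaler_sumr; congr normM.
  by apply: eq_bigr => i _; rewrite scalerA mulrC.
have hterm' : forall i, (a' i)%:E * dm (zs + v i)%R <= (a' i * (p i / t))%:E.
  move=> i; have [->|a'n0] := eqVneq (a' i) 0%R; first by rewrite mul0e mul0r.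
  have ben0 : be i != 0%R by apply/eqP => E; move: a'n0; rewrite /a' E mul0r eqxx.
  have nbad : ~~ bad i by apply/negP => hbi; move: ben0; rewrite /be hbi eqxx.
  have beE : be i = a i by rewrite /be (negbTE nbad).
  have apos : (0 < a i)%R.
    by rewrite lt_neqAle eq_sym -beE ben0 /=; case/andP: (hbe i) => ->.
  move: nbad; rewrite /bad apos /= -leNgt (proj2 (hterm i) apos) => hle.
  apply: (@le_trans _ _ ((a' i)%:E * (p i / t)%:E)); last by rewrite EFinM.
  apply: lee_wpmul2l; last exact: ediv.
  have := hbe i; case/andP => hb0 _; by rewrite lee_fin /a' /= divr_ge0 // ltW.
have hval' : val dm zs k a' v <= ((wb + (\sum_i be i * p i) / t) / s)%:E.
  rewrite /val hnorm; apply: (@le_trans _ _ ((s^-1 * wb)%:E + (\sum_i a' i * (p i / t))%:E)).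
    by apply: leeD => //; rewrite -sumEFin; apply: lee_sum => i _; exact: hterm'.
  rewrite -EFinD lee_fin le_eqVlt; apply/orP; left; apply/eqP.
  have -> : (\sum_i a' i * (p i / t) = (\sum_i be i * p i) * (s * t)^-1)%R.
    by rewrite mulr_suml; apply: eq_bigr => i _; rewrite /a'; field; rewrite ?gt_eqF.
  by field; rewrite ?gt_eqF.
have : t%:E * dm zs < m.
  apply: (@le_lt_trans _ _ (t%:E * ((wb + (\sum_i be i * p i) / t) / s)%:E)).
    by apply: lee_wpmul2l; [rewrite lee_fin ltW | exact: le_trans hdm hval'].
  rewrite -EFinM mE lte_fin.
  have -> : (t * ((wb + (\sum_i be i * p i) / t) / s) = (t * wb + \sum_i be i * p i) / s)%R.
    by field; rewrite ?gt_eqF.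
  rewrite ltr_pdivrMr //; lra.
have mle : m <= dp zs by apply: ereal_inf_lbound; exists zs.
move=> h; have := lt_trans (le_lt_trans mle hzs) h; by rewrite ltxx.
Qed.

End Main.

Theorem proposition1p4 (R : realType) (d : nat) (M : 'M[R]_d)
    (mesh : seq 'M[int]_d) (delta_p delta_m : 'rV[int]_d -> \bar R) :
  sym_pos_def M -> M_reduced_mesh M mesh ->
  nonneg_ext delta_p -> nonneg_ext delta_m ->
  super_solution M mesh delta_p -> sub_solution M mesh delta_m ->
  forall z : 'rV[int]_d, (delta_m z <= delta_p z)%E.
Proof.
move=> hpd hm hp0 hm0 hsup hsub z.
have H := fun t t0 t1 => @scaled R d M mesh t delta_p delta_m t0 t1 hpd hm hp0 hm0 hsup hsub z.
case Ep: (delta_p z) => [P||]; last 2 first.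
- by apply: leey.
- by have := hp0 z; rewrite Ep.
have P0 : 0 <= P by have := hp0 z; rewrite Ep lee_fin.
case Em: (delta_m z) => [q||]; last 2 first.
- have := H (1/2) ltac:(lra) ltac:(lra); rewrite Em Ep gt0_muley ?lte_fin //; lra.
- by apply: leNye.
rewrite lee_fin leNgt; apply/negP => hqP.
have q0 : 0 < q by apply: le_lt_trans hqP.
have t0 : 0 < (P + q) / (2 * q) by rewrite divr_gt0 ?mulr_gt0 //; lra.
have t1 : (P + q) / (2 * q) < 1 by rewrite ltr_pdivrMr ?mulr_gt0 //; lra.
have := H _ t0 t1; rewrite Em Ep -EFinM lee_fin.
have -> : (P + q) / (2 * q) * q = (P + q) / 2 by field; rewrite gt_eqF.
lra.
Qed.
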